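(* The following are equivalent for an integral domain $D$: (1) for every nonzero nonunit $x$ of $D$, $xD$ is a $\ast$-product of finitely many $\ast$-f-homog ideals of type $1$; (2) $D$ is a GCD domain that is a $\ast$-GKD.
   Context: $\ast$ is a star operation on $D$ of finite character. A $\ast$-ideal is a nonzero fractional ideal $I$ with $I^\ast=I$; of finite type if $I=J^\ast$ for some nonzero finitely generated $J$. A maximal $\ast$-ideal is an integral $\ast$-ideal maximal among proper integral $\ast$-ideals. A $\ast$-homog ideal is a proper integral $\ast$-ideal $I$ of finite type such that $(A+B)^\ast\neq D$ for every pair $A,B$ of proper integral $\ast$-ideals of finite type containing $I$; it lies in a unique maximal $\ast$-ideal $M(I)$. It is of type $1$ if for each $x\in M(I)\setminus\{0\}$ there is $n\ge1$ with $x^nD_{M(I)}\cap D\subseteq I$. A $\ast$-f-homog ideal is a $\ast$-homog ideal $I$ such that every $\ast$-ideal of finite type containing $I$ is principal; it is of type $1$ if it is also a $\ast$-homog ideal of type $1$. $D$ is a $\ast$-IRKT if $D_P$ is a valuation domain for every maximal $\ast$-ideal $P$, $D=\bigcap_P D_P$ over the maximal $\ast$-ideals with the intersection locally finite, and no two distinct maximal $\ast$-ideals contain a common nonzero prime ideal; $D$ is a $\ast$-GKD if it is a $\ast$-IRKT all of whose maximal $\ast$-ideals have height $1$. *)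

(* Defs.v *)
(* An integral domain D is represented as a subring of a
   field K such that K is the quotient field of D.  Subsets of K (in
   particular fractional ideals) are predicates K -> Prop, compared with
   extensional equality [seteq]. *)
From HB Require Import structures.
From Stdlib Require List.
From mathcomp Require Import all_boot all_order all_algebra.
Set Implicit Arguments. Unset Strict Implicit. Unset Printing Implicit Defensive.
Import GRing.Theory.
Local Open Scope ring_scope.

Section Defs.
Variable K : fieldType.
Implicit Types (D A B I J P Q : K -> Prop).
Implicit Types (st : (K -> Prop) -> (K -> Prop)).

Definition subset A B : Prop := forall z, A z -> B z.
Definition seteq A B : Prop := forall z, A z <-> B z.

Definition is_domain_in D : Prop :=
  [/\ D 0, D 1, (forall a b, D a -> D b -> D (a - b)),
      (forall a b, D a -> D b -> D (a * b)) &
      (forall z, exists a b, [/\ D a, D b, b != 0 & z = a / b])].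

Definition principal D (x : K) : K -> Prop := fun z => exists d, D d /\ z = x * d.
Definition scale (x : K) A : K -> Prop := fun z => exists y, A y /\ z = x * y.
Definition nonzero A : Prop := exists z, A z /\ z != 0.

Definition Dsubmodule D A : Prop :=
  [/\ A 0, (forall y z, A y -> A z -> A (y + z)) &
      (forall d z, D d -> A z -> A (d * z))].

Definition frac_ideal D I : Prop :=
  [/\ Dsubmodule D I, nonzero I & exists d, [/\ D d, d != 0 & forall z, I z -> D (d * z)]].

Definition gen D (s : seq K) : K -> Prop :=
  fun z => exists c : nat -> K, (forall i, D (c i)) /\ z = \sum_(i < size s) c i * s`_i.

Definition fin_gen D J : Prop := exists s, seteq J (gen D s).

Definition sum_ideal A B : K -> Prop := fun z => exists a b, [/\ A a, B b & z = a + b].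

Definition mul_ideal A B : K -> Prop :=
  fun z => exists s : seq (K * K),
    (forall p, List.In p s -> A p.1 /\ B p.2) /\ z = \sum_(p <- s) p.1 * p.2.

Fixpoint prod_ideal D (l : seq (K -> Prop)) : K -> Prop :=
  match l with
  | [::] => D
  | J0 :: l' => mul_ideal J0 (prod_ideal D l')
  end.

Definition star_op D (st : (K -> Prop) -> (K -> Prop)) : Prop :=
  (forall I, frac_ideal D I -> frac_ideal D (st I)) /\
  [/\ (forall x, x != 0 -> seteq (st (principal D x)) (principal D x)),
      (forall x I, x != 0 -> frac_ideal D I -> seteq (st (scale x I)) (scale x (st I))),
      (forall I, frac_ideal D I -> subset I (st I)),
      (forall I J, frac_ideal D I -> frac_ideal D J -> subset I J -> subset (st I) (st J)) &
      (forall I, frac_ideal D I -> seteq (st (st I)) (st I))].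

Definition finite_character D st : Prop :=
  forall I, frac_ideal D I -> forall z,
    st I z <-> exists J, [/\ fin_gen D J, nonzero J, subset J I & st J z].

Definition star_fc D st : Prop := star_op D st /\ finite_character D st.

Definition star_ideal D st I : Prop := frac_ideal D I /\ seteq (st I) I.

Definition finite_type D st I : Prop :=
  star_ideal D st I /\ exists J, [/\ fin_gen D J, nonzero J & seteq I (st J)].

Definition integral D I : Prop := subset I D.
Definition proper I : Prop := ~ I 1.

Definition pint_star D st I : Prop := [/\ star_ideal D st I, integral D I & proper I].

Definition max_star D st P : Prop :=
  pint_star D st P /\ forall Q, pint_star D st Q -> subset P Q -> subset Q P.

Definition loc D P : K -> Prop :=
  fun y => exists a s, [/\ D a, D s, ~ P s & y = a / s].

Definition homog D st I : Prop :=
  [/\ pint_star D st I, finite_type D st I &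
      forall A B, pint_star D st A -> finite_type D st A ->
                  pint_star D st B -> finite_type D st B ->
                  subset I A -> subset I B -> ~ seteq (st (sum_ideal A B)) D].

Definition homog_type1 D st I : Prop :=
  homog D st I /\
  exists M, [/\ max_star D st M, subset I M &
    forall x, M x -> x != 0 -> exists n : nat, (1 <= n)%N /\
      forall z, (exists y, loc D M y /\ z = x ^+ n * y) -> D z -> I z].

Definition is_principal D J : Prop := exists x, seteq J (principal D x).

Definition fhomog D st I : Prop :=
  homog D st I /\ forall J, finite_type D st J -> subset I J -> is_principal D J.

Definition fhomog_type1 D st I : Prop := fhomog D st I /\ homog_type1 D st I.

Definition divides D (a b : K) : Prop := exists c, D c /\ b = a * c.

Definition gcd_domain D : Prop :=
  forall a b, D a -> D b -> a != 0 -> b != 0 ->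
    exists d, [/\ D d, divides D d a, divides D d b &
      forall e, D e -> divides D e a -> divides D e b -> divides D e d].

Definition valuation (V : K -> Prop) : Prop := forall z, z != 0 -> V z \/ V z^-1.

Definition prime_ideal D Q : Prop :=
  [/\ Dsubmodule D Q, integral D Q, proper Q &
      forall a b, D a -> D b -> Q (a * b) -> Q a \/ Q b].

Definition star_IRKT D st : Prop :=
  [/\ (forall P, max_star D st P -> valuation (loc D P)),
      (forall z, D z <-> (forall P, max_star D st P -> loc D P z)),
      (forall x, D x -> x != 0 -> exists l : seq (K -> Prop),
          forall P, max_star D st P -> P x -> exists Q, List.In Q l /\ seteq P Q) &
      (forall P1 P2, max_star D st P1 -> max_star D st P2 -> ~ seteq P1 P2 ->
          ~ exists Q, [/\ prime_ideal D Q, nonzero Q, subset Q P1 & subset Q P2])].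

Definition height_one D P : Prop :=
  [/\ prime_ideal D P, nonzero P &
      forall Q, prime_ideal D Q -> nonzero Q -> subset Q P -> seteq Q P].

Definition star_GKD D st : Prop :=
  star_IRKT D st /\ forall P, max_star D st P -> height_one D P.

Definition cond1 D st : Prop :=
  forall x, D x -> x != 0 -> ~ D x^-1 ->
    exists l : seq (K -> Prop),
      (forall I, List.In I l -> fhomog_type1 D st I) /\
      seteq (principal D x) (st (prod_ideal D l)).

Definition cond2 D st : Prop := gcd_domain D /\ star_GKD D st.

End Defs.

(* Main.v *)
Require Import Defs.
From mathcomp Require Import all_boot all_order all_algebra.
From HB Require Import structures.
From Stdlib Require List.
From Stdlib Require Import Classical FunctionalExtensionality PropExtensionality.
From mathcomp Require Import ring.
From mathcomp Require classical_sets.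
Require Import Defs.
Set Implicit Arguments. Unset Strict Implicit. Unset Printing Implicit Defensive.
Import GRing.Theory.
Local Open Scope ring_scope.
Set Default Proof Using "All".


Lemma seteq_eq (K : Type) (A B : K -> Prop) : (forall z, A z <-> B z) -> A = B.
Proof. move=> h; apply: functional_extensionality => z; apply: propositional_extensionality; exact: h. Qed.

Section Basic.
Variable K : fieldType.
Variable D : K -> Prop.
Hypothesis hD : is_domain_in D.

Lemma D0 : D 0. Proof. by case: hD. Qed.
Lemma D1 : D 1. Proof. by case: hD. Qed.
Lemma Dsub a b : D a -> D b -> D (a - b). Proof. by case: hD => _ _ h _ _; apply: h. Qed.
Lemma Dmul a b : D a -> D b -> D (a * b). Proof. by case: hD => _ _ _ h _; apply: h. Qed.
Lemma Dopp a : D a -> D (- a).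
Proof. move=> ha; have := Dsub D0 ha; by rewrite sub0r. Qed.
Lemma Dadd a b : D a -> D b -> D (a + b).
Proof. move=> ha hb; have := Dsub ha (Dopp hb); by rewrite opprK. Qed.
Lemma Dfrac z : exists a b, [/\ D a, D b, b != 0 & z = a / b].
Proof. by case: hD => _ _ _ _ h; apply: h. Qed.
Lemma Dexp a n : D a -> D (a ^+ n).
Proof. move=> ha; elim: n => [|n IH]; first by rewrite expr0; exact D1. by rewrite exprS; apply: Dmul. Qed.
Lemma Dnat (n : nat) : D n%:R.
Proof. elim: n => [|n IH]; first exact D0. by rewrite -addn1 natrD; apply: Dadd => //; exact D1. Qed.

Lemma Dsum n (F : 'I_n -> K) : (forall i, D (F i)) -> D (\sum_(i < n) F i).
Proof. move=> h; apply: (big_ind D) => //; [exact D0 | exact Dadd]. Qed.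
Lemma Dsum_seq (I : Type) (s : seq I) (F : I -> K) :
  (forall i, List.In i s -> D (F i)) -> D (\sum_(i <- s) F i).
Proof.
elim: s => [|x s IH] h; first by rewrite big_nil; exact D0.
rewrite big_cons; apply: Dadd; first by apply: h; left.
by apply: IH => i hi; apply: h; right.
Qed.
Lemma Dprod_seq (I : Type) (s : seq I) (F : I -> K) :
  (forall i, List.In i s -> D (F i)) -> D (\prod_(i <- s) F i).
Proof.
elim: s => [|x s IH] h; first by rewrite big_nil; exact D1.
rewrite big_cons; apply: Dmul; first by apply: h; left.
by apply: IH => i hi; apply: h; right.
Qed.

Lemma sub_sum (A : K -> Prop) n (F : 'I_n -> K) :
  Dsubmodule D A -> (forall i, A (F i)) -> A (\sum_(i < n) F i).
Proof. case=> h0 hadd _ h; apply: (big_ind A) => //. Qed.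
Lemma sub_sum_seq (A : K -> Prop) (I : Type) (s : seq I) (F : I -> K) :
  Dsubmodule D A -> (forall i, List.In i s -> A (F i)) -> A (\sum_(i <- s) F i).
Proof.
move=> hA; case: (hA) => h0 hadd _.
elim: s => [|x s IH] h; first by rewrite big_nil.
rewrite big_cons; apply: hadd; first by apply: h; left.
by apply: IH => i hi; apply: h; right.
Qed.
Lemma sub_opp (A : K -> Prop) z : Dsubmodule D A -> A z -> A (- z).
Proof. case=> _ _ h hz; rewrite -mulN1r; apply: h => //; apply: Dopp D1. Qed.
Lemma sub_sub (A : K -> Prop) y z : Dsubmodule D A -> A y -> A z -> A (y - z).
Proof. move=> hA hy hz; case: (hA) => _ h _; apply: h => //; exact: sub_opp. Qed.

Lemma principal_sub x : Dsubmodule D (principal D x).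
Proof.
split.
- by exists 0; rewrite mulr0; split => //; exact D0.
- move=> y z [a [ha ->]] [b [hb ->]]; exists (a + b); split; [exact: Dadd | by rewrite mulrDr].
- move=> d z hd [a [ha ->]]; exists (d * a); split; [exact: Dmul | by rewrite mulrCA].
Qed.
Lemma principal_self x : principal D x x.
Proof. by exists 1; rewrite mulr1; split => //; exact D1. Qed.
Lemma principal1 : principal D 1 = D.
Proof.
apply: seteq_eq => z; split; first by case=> d [hd ->]; rewrite mul1r.
by move=> hz; exists z; rewrite mul1r.
Qed.
Lemma D_sub : Dsubmodule D D.
Proof. by have := principal_sub 1; rewrite principal1. Qed.

Lemma frac_int (A : K -> Prop) : Dsubmodule D A -> nonzero A -> subset A D -> frac_ideal D A.
Proof. move=> h1 h2 h3; split => //; exists 1; split; [exact D1 | exact: oner_neq0 | by move=> z /h3; rewrite mul1r]. Qed.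

Lemma principal_frac x : x != 0 -> frac_ideal D (principal D x).
Proof.
move=> x0; split; first exact: principal_sub.
- by exists x; split; [exact: principal_self | ].
- have [a [b [ha hb b0 ->]]] := Dfrac x.
  exists b; split => // z [d [hd ->]].
  have -> : b * (a / b * d) = a * d by field.
  exact: Dmul.
Qed.

Lemma D_frac : frac_ideal D D.
Proof. by have := principal_frac (oner_neq0 K); rewrite principal1. Qed.

Lemma scale_principal c x : scale c (principal D x) = principal D (c * x).
Proof.
apply: seteq_eq => z; split.
- by case=> y [[d [hd ->]] ->]; exists d; rewrite mulrA.
- by case=> d [hd ->]; exists (x * d); split; [exists d | rewrite mulrA].
Qed.

Lemma scale_inj c (A B : K -> Prop) : c != 0 -> scale c A = scale c B -> A = B.
Proof.
move=> c0 h; apply: seteq_eq => z; split => hz.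
- have : scale c A (c * z) by exists z.
  by rewrite h => -[y [hy /(mulfI c0) ->]].
- have : scale c B (c * z) by exists z.
  by rewrite -h => -[y [hy /(mulfI c0) ->]].
Qed.

Lemma scale_sub c (A : K -> Prop) : Dsubmodule D A -> Dsubmodule D (scale c A).
Proof.
case=> h0 hadd hm; split.
- by exists 0; rewrite mulr0.
- by move=> y z [a [ha ->]] [b [hb ->]]; exists (a + b); rewrite mulrDr; split => //; exact: hadd.
- by move=> d z hd [a [ha ->]]; exists (d * a); rewrite mulrCA; split => //; exact: hm.
Qed.

Lemma scale_frac c (A : K -> Prop) : c != 0 -> frac_ideal D A -> frac_ideal D (scale c A).
Proof.
move=> c0 [hs [z [hz z0]] [d [hd d0 hb]]]; split; first exact: scale_sub.
- by exists (c * z); split; [exists z | rewrite mulf_neq0].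
- have [a [b [ha hb' b0 e]]] := Dfrac c.
  exists (d * b); split; [exact: Dmul | by rewrite mulf_neq0 | ].
  move=> y [w [hw ->]].
  have -> : d * b * (c * w) = a * (d * w) by rewrite e; field.
  exact/Dmul/hb.
Qed.
End Basic.


Section Gen.
Variable K : fieldType.
Variable D : K -> Prop.
Hypothesis hD : is_domain_in D.

Lemma gen_sub s : Dsubmodule D (gen D s).
Proof.
split.
- exists (fun _ => 0); split; first by move=> _; exact: (D0 hD).
  by rewrite big1 // => i _; rewrite mul0r.
- move=> y z [c [hc ->]] [c' [hc' ->]]; exists (fun i => c i + c' i); split.
  + by move=> i; apply: (Dadd hD).
  + by rewrite -big_split /=; apply: eq_bigr => i _; rewrite mulrDl.
- move=> d z hd [c [hc ->]]; exists (fun i => d * c i); split.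
  + by move=> i; apply: (Dmul hD).
  + by rewrite mulr_sumr; apply: eq_bigr => i _; rewrite mulrA.
Qed.

Lemma gen_in s i : (i < size s)%N -> gen D s (nth 0 s i).
Proof.
move=> hi; exists (fun j => if j == i then 1 else 0); split.
- by move=> j; case: ifP => _; [exact: (D1 hD) | exact: (D0 hD)].
- rewrite (bigD1 (Ordinal hi)) //= eqxx mul1r big1 ?addr0 // => j hj.
  have -> : (nat_of_ord j == i) = false.
    by apply/negbTE; move: hj; apply: contra => /eqP e; apply/eqP/val_inj.
  by rewrite mul0r.
Qed.

Lemma gen_mem s x : x \in s -> gen D s x.
Proof. move=> hx; rewrite -(nth_index 0 hx); apply: gen_in; by rewrite index_mem. Qed.

Lemma gen_min s (A : K -> Prop) : Dsubmodule D A ->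
  (forall i, (i < size s)%N -> A (nth 0 s i)) -> subset (gen D s) A.
Proof.
move=> hA h z [c [hc ->]]; apply: (sub_sum hD hA) => i.
case: hA => _ _ hm; apply: hm => //; exact: h.
Qed.

Lemma common_denom s : exists d, [/\ D d, d != 0 & forall i, (i < size s)%N -> D (d * nth 0 s i)].
Proof.
elim: s => [|x s [d [hd d0 h]]].
- by exists 1; split => //; [exact: (D1 hD) | exact: oner_neq0].
- have [a [b [ha hb b0 ->]]] := Dfrac hD x.
  exists (d * b); split; [exact: (Dmul hD) | by rewrite mulf_neq0 | ].
  case=> [|i] /= hi.
  + have -> : d * b * (a / b) = d * a by field.
    exact: (Dmul hD).
  + have -> : d * b * nth 0 s i = b * (d * nth 0 s i) by ring.
    by apply: (Dmul hD) => //; apply: h.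
Qed.

Lemma gen_frac s : nonzero (gen D s) -> frac_ideal D (gen D s).
Proof.
move=> nz; split => //; first exact: gen_sub.
have [d [hd d0 h]] := common_denom s.
exists d; split => // z [c [hc ->]].
rewrite mulr_sumr; apply: (Dsum hD) => i.
have -> : d * (c i * nth 0 s i) = c i * (d * nth 0 s i) by ring.
by apply: (Dmul hD) => //; apply: h.
Qed.

Lemma gen_int s : (forall i, (i < size s)%N -> D (nth 0 s i)) -> subset (gen D s) D.
Proof. move=> h; apply: gen_min => //; exact: (D_sub hD). Qed.

Lemma gen_map c s : gen D (map (fun y => c * y) s) = scale c (gen D s).
Proof.
apply: seteq_eq => z; split.
- case=> f [hf ->]; exists (\sum_(i < size s) f i * nth 0 s i); split.
  + by exists f.
  + rewrite mulr_sumr size_map; apply: eq_bigr => i _.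
    rewrite (nth_map 0) //; ring.
- case=> y [[f [hf ->]] ->]; exists f; split => //.
  rewrite mulr_sumr size_map; apply: eq_bigr => i _.
  rewrite (nth_map 0) //; ring.
Qed.

Definition sp (a b : K) := sum_ideal (principal D a) (principal D b).

Lemma sp_gen a b : sp a b = gen D [:: a; b].
Proof.
apply: seteq_eq => z; split.
- case=> y [w [[d [hd ->]] [e [he ->]] ->]].
  exists (fun i => if i == 0%N then d else e); split.
  + by move=> i; case: ifP.
  + by rewrite !big_ord_recl big_ord0 /= addr0 ![_ * a]mulrC ![_ * b]mulrC.
- case=> f [hf ->]; rewrite !big_ord_recl big_ord0 /= addr0.
  exists (a * f 0%N), (b * f 1%N); split => //.
  + by exists (f 0%N).
  + by exists (f 1%N).
  + by rewrite ![f _ * _]mulrC.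
Qed.

Lemma sum_submod (A B : K -> Prop) : Dsubmodule D A -> Dsubmodule D B -> Dsubmodule D (sum_ideal A B).
Proof.
case=> a0 aadd amul [b0 badd bmul]; split.
- by exists 0, 0; rewrite addr0.
- move=> y z [a [b [ha hb ->]]] [a' [b' [ha' hb' ->]]].
  exists (a + a'), (b + b'); split; [exact: aadd | exact: badd | ring].
- move=> d z hd [a [b [ha hb ->]]]; exists (d * a), (d * b); split.
  + exact: amul. + exact: bmul. + by rewrite mulrDr.
Qed.

Lemma sum_int (A B : K -> Prop) : subset A D -> subset B D -> subset (sum_ideal A B) D.
Proof. by move=> hA hB z [a [b [ha hb ->]]]; apply: (Dadd hD); [apply: hA | apply: hB]. Qed.

Lemma sum_l (A B : K -> Prop) : Dsubmodule D B -> subset A (sum_ideal A B).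
Proof. by case=> h0 _ _ z hz; exists z, 0; rewrite addr0. Qed.
Lemma sum_r (A B : K -> Prop) : Dsubmodule D A -> subset B (sum_ideal A B).
Proof. by case=> h0 _ _ z hz; exists 0, z; rewrite add0r. Qed.

Lemma sum_frac_int (A B : K -> Prop) : Dsubmodule D A -> Dsubmodule D B -> nonzero A ->
  subset A D -> subset B D -> frac_ideal D (sum_ideal A B).
Proof.
move=> hA hB [z [hz z0]] iA iB; apply: (frac_int hD).
- exact: sum_submod.
- by exists z; split => //; apply: sum_l.
- exact: sum_int.
Qed.

Lemma principal_int a : D a -> subset (principal D a) D.
Proof. by move=> ha z [d [hd ->]]; apply: (Dmul hD). Qed.

Lemma sp_frac a b : D a -> D b -> a != 0 -> frac_ideal D (sp a b).
Proof.
move=> ha hb a0; apply: sum_frac_int; try exact: principal_sub; try exact: principal_int.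
by exists a; split => //; apply: principal_self.
Qed.

Lemma sp_int a b : D a -> D b -> subset (sp a b) D.
Proof. by move=> ha hb; apply: sum_int; apply: principal_int. Qed.

Lemma sp_in_l a b : sp a b a.
Proof. exists a, 0; split; last (by rewrite addr0); first exact: (principal_self hD). by exists 0; rewrite mulr0; split => //; exact: (D0 hD). Qed.
Lemma sp_in_r a b : sp a b b.
Proof. exists 0, b; split; last (by rewrite add0r); last exact: (principal_self hD). by exists 0; rewrite mulr0; split => //; exact: (D0 hD). Qed.

Lemma sp_min a b (A : K -> Prop) : Dsubmodule D A -> A a -> A b -> subset (sp a b) A.
Proof.
move=> [h0 hadd hm] ha hb z [y [w [[d [hd ->]] [e [he ->]] ->]]].
by apply: hadd; rewrite mulrC; apply: hm.
Qed.

Lemma scale_sp c a b : scale c (sp a b) = sp (c * a) (c * b).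
Proof.
apply: seteq_eq => z; split.
- case=> y [[u [v [[d [hd ->]] [e [he ->]] ->]]] ->].
  exists (c * a * d), (c * b * e); split; [by exists d | by exists e | ring].
- case=> u [v [[d [hd ->]] [e [he ->]] ->]].
  exists (a * d + b * e); split; last by ring.
  exists (a * d), (b * e); split => //; [by exists d | by exists e].
Qed.

End Gen.


Section Star.
Variable K : fieldType.
Variable D : K -> Prop.
Variable st : (K -> Prop) -> (K -> Prop).
Hypothesis hD : is_domain_in D.
Hypothesis hst : star_fc D st.

Lemma st_frac I : frac_ideal D I -> frac_ideal D (st I).
Proof. by case: hst => [[h _] _]; apply: h. Qed.
Lemma st_princ x : x != 0 -> st (principal D x) = principal D x.
Proof. by case: hst => [[_ [h _ _ _ _]] _] x0; apply: seteq_eq; apply: h. Qed.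
Lemma st_scale x I : x != 0 -> frac_ideal D I -> st (scale x I) = scale x (st I).
Proof. by case: hst => [[_ [_ h _ _ _]] _] x0 hI; apply: seteq_eq; apply: h. Qed.
Lemma st_ext I : frac_ideal D I -> subset I (st I).
Proof. by case: hst => [[_ [_ _ h _ _]] _]; apply: h. Qed.
Lemma st_mono I J : frac_ideal D I -> frac_ideal D J -> subset I J -> subset (st I) (st J).
Proof. by case: hst => [[_ [_ _ _ h _]] _]; apply: h. Qed.
Lemma st_idem I : frac_ideal D I -> st (st I) = st I.
Proof. by case: hst => [[_ [_ _ _ _ h]] _] hI; apply: seteq_eq; apply: h. Qed.
Lemma st_fc I z : frac_ideal D I ->
  st I z <-> exists J, [/\ fin_gen D J, nonzero J, subset J I & st J z].
Proof. by case: hst => _ h hI; apply: h. Qed.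

Lemma st_D : st D = D.
Proof. by rewrite -(principal1 hD) st_princ // oner_neq0. Qed.

Lemma st_int I : frac_ideal D I -> subset I D -> subset (st I) D.
Proof. move=> hI iI; rewrite -st_D; apply: st_mono => //; exact: (D_frac hD). Qed.

Lemma st_below I J : frac_ideal D I -> frac_ideal D J -> st J = J -> subset I J -> subset (st I) J.
Proof. by move=> hI hJ e s; rewrite -e; apply: st_mono. Qed.

Lemma st_one I : frac_ideal D I -> subset I D -> st I 1 -> st I = D.
Proof.
move=> hI iI h1; apply: seteq_eq => z; split; first exact: st_int.
move=> hz; have [[_ _ hm] _ _] := st_frac hI.
by rewrite -(mulr1 z); apply: hm.
Qed.

Lemma star_ideal_st I : frac_ideal D I -> star_ideal D st (st I).
Proof. by move=> hI; split; [exact: st_frac | rewrite st_idem]. Qed.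

Section Max.
Variable P : K -> Prop.
Hypothesis hP : max_star D st P.

Lemma max_frac : frac_ideal D P. Proof. by case: hP => [[[h _] _ _] _]. Qed.
Lemma max_st : st P = P. Proof. by case: hP => [[[_ h] _ _] _]; apply: seteq_eq. Qed.
Lemma max_int : subset P D. Proof. by case: hP => [[_ h _] _]. Qed.
Lemma max_proper : ~ P 1. Proof. by case: hP => [[_ _ h] _]. Qed.
Lemma max_sub : Dsubmodule D P. Proof. by case: max_frac. Qed.
Lemma max_0 : P 0. Proof. by case: max_sub. Qed.
Lemma max_mul d z : D d -> P z -> P (d * z). Proof. by case: max_sub => _ _; apply. Qed.
Lemma max_mulr d z : D d -> P z -> P (z * d). Proof. by rewrite mulrC; apply: max_mul. Qed.
Lemma max_add y z : P y -> P z -> P (y + z). Proof. by case: max_sub => _ h _; apply: h. Qed.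

Lemma max_grow a : D a -> ~ P a -> st (sum_ideal P (principal D a)) 1.
Proof.
move=> ha na; apply: NNPP => n1.
have fS : frac_ideal D (sum_ideal P (principal D a)).
  apply: (sum_frac_int hD); [exact: max_sub | exact: (principal_sub hD) | by case: max_frac | exact: max_int | exact: (principal_int hD)].
have iS := sum_int hD max_int (principal_int hD ha).
have pT : pint_star D st (st (sum_ideal P (principal D a))).
  split => //; [exact: star_ideal_st | exact: st_int].
have sPT : subset P (st (sum_ideal P (principal D a))).
  by move=> z hz; apply: st_ext => //; apply: (sum_l hD) => //; apply: (principal_sub hD).
case: hP => _ hmax; apply: na; apply: (hmax _ pT sPT); apply: st_ext => //.
by apply: (sum_r hD); [exact: max_sub | exact: (principal_self hD)].
Qed.

Lemma max_prime a b : D a -> D b -> P (a * b) -> P a \/ P b.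
Proof.
move=> ha hb hab; case: (classic (P a)) => pa; [by left | right].
case: (eqVneq b 0) => [-> | b0]; first exact: max_0.
have h1 := max_grow ha pa.
have fS : frac_ideal D (sum_ideal P (principal D a)).
  apply: (sum_frac_int hD); [exact: max_sub | exact: (principal_sub hD) | by case: max_frac | exact: max_int | exact: (principal_int hD)].
have : scale b (st (sum_ideal P (principal D a))) b by exists 1; rewrite mulr1.
rewrite -st_scale //; apply: st_below => //; [exact: (scale_frac hD) | exact: max_frac | exact: max_st | ].
move=> z [y [[p [w [hp [d [hd ->]] ->]]] ->]].
rewrite mulrDr; apply: max_add; first exact: max_mul.
have -> : b * (a * d) = d * (a * b) by ring.
exact: max_mul.
Qed.

Lemma max_exp x n : D x -> P (x ^+ n) -> P x.
Proof.
move=> hx; elim: n => [|n IH]; first by rewrite expr0 => /max_proper.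
rewrite exprS => /max_prime [] //; [exact: (Dexp hD)].
Qed.

Lemma max_nmul s t : D s -> D t -> ~ P s -> ~ P t -> ~ P (s * t).
Proof. by move=> hs ht ns nt /max_prime [] //. Qed.

Lemma max_unit x : x != 0 -> D x -> D x^-1 -> ~ P x.
Proof. move=> x0 hx hx' px; apply: max_proper; rewrite -(mulVf x0); exact: max_mul. Qed.

Notation V := (loc D P).

Lemma loc_D z : D z -> V z.
Proof. move=> hz; exists z, 1; split => //; [exact: (D1 hD) | exact: max_proper | by rewrite invr1 mulr1]. Qed.
Lemma loc_frac a s : D a -> D s -> ~ P s -> V (a / s).
Proof. by move=> ha hs ns; exists a, s. Qed.
Lemma loc_inv s : D s -> ~ P s -> V s^-1.
Proof. by move=> hs ns; rewrite -(mul1r s^-1); apply: loc_frac => //; exact: (D1 hD). Qed.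

Lemma loc_s0 s : ~ P s -> s != 0.
Proof. by move=> ns; apply/eqP => e; apply: ns; rewrite e; exact: max_0. Qed.

Lemma loc_mul y z : V y -> V z -> V (y * z).
Proof.
move=> [a [s [ha hs ns ->]]] [b [t [hb ht nt ->]]].
exists (a * b), (s * t); split; [exact: (Dmul hD) | exact: (Dmul hD) | exact: max_nmul | ].
have s0 := loc_s0 ns; have t0 := loc_s0 nt; field.
by rewrite s0 t0.
Qed.
Lemma loc_add y z : V y -> V z -> V (y + z).
Proof.
move=> [a [s [ha hs ns ->]]] [b [t [hb ht nt ->]]].
exists (a * t + b * s), (s * t); split; [ | exact: (Dmul hD) | exact: max_nmul | ].
  by apply: (Dadd hD); apply: (Dmul hD).
have s0 := loc_s0 ns; have t0 := loc_s0 nt; field.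
by rewrite s0 t0.
Qed.
Lemma loc_opp y : V y -> V (- y).
Proof. move=> [a [s [ha hs ns ->]]]; exists (- a), s; split => //; [exact: (Dopp hD) | by rewrite mulNr]. Qed.
Lemma loc_exp y n : V y -> V (y ^+ n).
Proof. move=> hy; elim: n => [|n IH]; first by rewrite expr0; apply: loc_D; exact: (D1 hD). by rewrite exprS; apply: loc_mul. Qed.
Lemma loc_1 : V 1. Proof. apply: loc_D; exact: (D1 hD). Qed.

Lemma loc_P z x : D z -> P x -> x != 0 -> V (z / x) -> P z.
Proof.
move=> hz px x0 [a [s [ha hs ns e]]].
have s0 := loc_s0 ns.
have hzs : z * s = a * x.
  have : z / x * (x * s) = a / s * (x * s) by rewrite e.
  move=> h; rewrite -[LHS](_ : z / x * (x * s) = z * s); last by field.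
  by rewrite h; field.
have : P (z * s) by rewrite hzs; apply: max_mul.
by case/max_prime.
Qed.

Lemma coprime_notboth a b : D a -> D b -> a != 0 -> st (sp D a b) = D -> P a -> P b -> False.
Proof.
move=> ha hb a0 e pa pb; apply: max_proper.
have : st (sp D a b) 1 by rewrite e; exact: (D1 hD).
apply: st_below => //; [exact: (sp_frac hD) | exact: max_frac | exact: max_st | ].
by apply: (sp_min hD) => //; exact: max_sub.
Qed.

End Max.
End Star.


Lemma list_choice (T : Type) (t0 : T) (K : fieldType) (s : seq K) (R : K -> T -> Prop) :
  (forall i, (i < size s)%N -> exists y, R (nth 0 s i) y) ->
  exists t : seq T, size t = size s /\ forall i, (i < size s)%N -> R (nth 0 s i) (nth t0 t i).
Proof.
elim: s => [|x s IH] h; first by exists [::].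
have [y hy] := h 0%N isT.
have [t [ht1 ht2]] : exists t : seq T, size t = size s /\ forall i, (i < size s)%N -> R (nth 0 s i) (nth t0 t i).
  by apply: IH => i hi; exact: (h i.+1 hi).
by exists (y :: t); split => [/=|[|i] hi]; [rewrite ht1 | | apply: ht2].
Qed.

Lemma fun_choice (K : eqType) (T : Type) (t0 : T) (s : seq K) (R : K -> T -> Prop) :
  (forall a, List.In a s -> exists y, R a y) -> exists f : K -> T, forall a, List.In a s -> R a (f a).
Proof.
elim: s => [|x s IH] h; first by exists (fun _ => t0).
have [y hy] := h x (or_introl erefl).
have [f hf] := IH (fun a ha => h a (or_intror ha)).
exists (fun a => if a == x then y else f a) => a [<-|ha]; first by rewrite eqxx.
by case: eqP => [->|_]; [ | apply: hf].
Qed.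

Lemma prime_list (K : fieldType) (D Q : K -> Prop) (hD : is_domain_in D) :
  (forall a b, D a -> D b -> Q (a * b) -> Q a \/ Q b) ->
  forall la u, D u -> (forall a, List.In a la -> D a) -> Q (u * \prod_(a <- la) a) ->
  Q u \/ exists a, List.In a la /\ Q a.
Proof.
move=> hQ; elim=> [|x la IH] u hu hla; first by rewrite big_nil mulr1; left.
rewrite big_cons mulrCA => h.
have hx : D x by apply: hla; left.
have hr : D (u * \prod_(a <- la) a).
  by apply: (Dmul hD) => //; apply: (Dprod_seq hD) => a ha; apply: hla; right.
case: (hQ _ _ hx hr h) => [qx | qr]; first by right; exists x; split => //; left.
case: (IH u hu (fun a ha => hla a (or_intror ha)) qr) => [qu | [a [ha qa]]]; first by left.
by right; exists a; split => //; right.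
Qed.

Lemma prod_neq0 (K : fieldType) (la : seq K) : (forall a, List.In a la -> a != 0) -> \prod_(a <- la) a != 0.
Proof.
elim: la => [|x la IH] h; first by rewrite big_nil oner_neq0.
by rewrite big_cons mulf_neq0 //; [apply: h; left | apply: IH => a ha; apply: h; right].
Qed.

Section One.
Variable K : fieldType.
Variable D : K -> Prop.
Variable st : (K -> Prop) -> (K -> Prop).
Hypothesis hD : is_domain_in D.
Hypothesis hst : star_fc D st.

Lemma mul_principal a b : mul_ideal (principal D a) (principal D b) = principal D (a * b).
Proof.
apply: seteq_eq => z; split.
- case=> s [hs ->]; apply: (sub_sum_seq hD (principal_sub hD (a * b))) => p hp.
  have [[d [hd e1]] [e [he e2]]] := hs p hp.
  rewrite e1 e2; exists (d * e); split; [exact: (Dmul hD) | ring].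
- case=> d [hd ->]; exists [:: (a * d, b)]; split.
  + by move=> p [<-|[]]; split; [exists d | exact: (principal_self hD)].
  + by rewrite big_cons big_nil addr0 /=; ring.
Qed.

Lemma prod_principal la : prod_ideal D (map (principal D) la) = principal D (\prod_(a <- la) a).
Proof.
elim: la => [|x la IH] /=; first by rewrite big_nil (principal1 hD).
by rewrite IH mul_principal big_cons.
Qed.

Lemma list_principal (l : seq (K -> Prop)) :
  (forall I, List.In I l -> exists a, I = principal D a) -> exists la, l = map (principal D) la.
Proof.
elim: l => [|I l IH] h; first by exists [::].
have [a ->] := h I (or_introl erefl).
have [la ->] := IH (fun J hJ => h J (or_intror hJ)).
by exists (a :: la).
Qed.

Lemma fhomog_principal I : fhomog D st I -> exists a, I = principal D a.
Proof.
case=> [[_ hft _] h]; have [x hx] := h I hft (fun z hz => hz).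
by exists x; apply: seteq_eq.
Qed.

Definition good a := [/\ D a, a != 0 & fhomog_type1 D st (principal D a)].

Lemma good_of a : fhomog_type1 D st (principal D a) -> good a.
Proof.
move=> h; have [[[[[fr _] iI _] _ _] _] _] := h.
split => //; first by apply: iI; exact: (principal_self hD).
case: fr => _ [z [[d [hd ->]] z0]] _.
by apply: contraNneq z0 => ->; rewrite mul0r.
Qed.

Lemma ft_gen s : nonzero (gen D s) -> finite_type D st (st (gen D s)).
Proof.
move=> nz; split; first by apply: (star_ideal_st hD hst); exact: (gen_frac hD).
by exists (gen D s); split => //; exists s.
Qed.

Lemma gen_below_max P s : max_star D st P -> nonzero (gen D s) -> subset (gen D s) P ->
  subset (st (gen D s)) P.
Proof.
move=> hP nz sP; apply: (st_below hD hst) => //; [exact: (gen_frac hD) | exact: (max_frac hD hst hP) | exact: (max_st hD hst hP)].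
Qed.

Lemma pint_gen P s : max_star D st P -> nonzero (gen D s) -> subset (gen D s) P ->
  pint_star D st (st (gen D s)).
Proof.
move=> hP nz sP; have h := gen_below_max hP nz sP; split.
- by apply: (star_ideal_st hD hst); exact: (gen_frac hD).
- by move=> z /h; apply: (max_int hD hst hP).
- by move=> /h; apply: (max_proper hD hst hP).
Qed.

Lemma principal_in_gen a s : List.In a s -> subset (principal D a) (gen D s).
Proof.
move=> ha z [d [hd ->]]; have [_ _ hm] := gen_sub hD s; rewrite mulrC; apply: hm => //.
elim: s ha => [|x s IH] //= [->|h]; first by apply: (gen_in hD (i := 0)).
have := IH h; case=> c [hc ->]; exists (fun i => if i is j.+1 then c j else 0); split.
  by case=> [|j]; [exact: (D0 hD) | apply: hc].
by rewrite big_ord_recl /= mul0r add0r; apply: eq_bigr.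
Qed.

Lemma gen_nz a s : List.In a s -> a != 0 -> nonzero (gen D s).
Proof. move=> ha a0; exists a; split => //; apply: (principal_in_gen ha); exact: (principal_self hD). Qed.

Lemma good_uniq a M N : good a -> max_star D st M -> max_star D st N -> M a -> N a -> M = N.
Proof.
move=> [ha a0 [[[_ _ hhom] _] _]] hM hN Ma Na.
suff sNM : subset N M.
  have [_ hmax] := hN; apply: seteq_eq => z; split; [apply: (hmax M (proj1 hM) sNM) | apply: sNM].
apply: NNPP => nsub.
have [p [Np nMp]] : exists p, N p /\ ~ M p.
  apply: NNPP => hne; apply: nsub => z hz; apply: NNPP => hz'; apply: hne; by exists z.
have Dp : D p := max_int hD hst hN Np.
have h1 := max_grow hD hst hM Dp nMp.
have fS : frac_ideal D (sum_ideal M (principal D p)).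
  apply: (sum_frac_int hD); [exact: (max_sub hD hst hM) | exact: (principal_sub hD) | by case: (max_frac hD hst hM) | exact: (max_int hD hst hM) | exact: (principal_int hD)].
have [J [[s hs] nzJ sJ stJ]] := (st_fc hD hst _ fS).1 h1.
move: (seteq_eq hs) => eJ; subst J.
have [ms [hsz hms]] : exists ms : seq K, size ms = size s /\ forall i, (i < size s)%N ->
    M (nth 0 ms i) /\ principal D p (nth 0 s i - nth 0 ms i).
  apply: (list_choice 0 (R := fun x m => M m /\ principal D p (x - m))) => i hi.
  have [m [w [hm hw e]]] := sJ _ (gen_in hD hi).
  by exists m; split => //; rewrite e; have -> : m + w - m = w by ring.
have nzA : nonzero (gen D (a :: ms)) by apply: (gen_nz (a := a)) => //; left.
have nzB : nonzero (gen D [:: a; p]) by apply: (gen_nz (a := a)) => //; left.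
have gA : subset (gen D (a :: ms)) M.
  apply: (gen_min hD (max_sub hD hst hM)) => -[|i] //= hi.
  by rewrite -hsz in hms; have [] := hms i hi.
have gB : subset (gen D [:: a; p]) N.
  by apply: (gen_min hD (max_sub hD hst hN)) => -[|[|i]] //=.
have fA := st_frac hD hst (gen_frac hD nzA).
have fB := st_frac hD hst (gen_frac hD nzB).
have iA : subset (st (gen D (a :: ms))) D by move=> z /(gen_below_max hM nzA gA); exact: (max_int hD hst hM).
have iB : subset (st (gen D [:: a; p])) D by move=> z /(gen_below_max hN nzB gB); exact: (max_int hD hst hN).
have fAB : frac_ideal D (sum_ideal (st (gen D (a :: ms))) (st (gen D [:: a; p]))).
  by apply: (sum_frac_int hD) => //; [case: fA | case: fB | case: fA].
apply: (hhom (st (gen D (a :: ms))) (st (gen D [:: a; p]))).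
- exact: (pint_gen hM).
- exact: ft_gen.
- exact: (pint_gen hN).
- exact: ft_gen.
- move=> z hz; apply: (st_ext hD hst (gen_frac hD nzA)); by apply: (principal_in_gen (a := a)) => //; left.
- move=> z hz; apply: (st_ext hD hst (gen_frac hD nzB)); by apply: (principal_in_gen (a := a)) => //; left.
- move=> z; rewrite (st_one hD hst fAB) //; first exact: (sum_int hD iA iB).
  have hm := st_mono hD hst (gen_frac hD nzJ) fAB; apply: (hm _ 1 stJ).
  case: fA => sA _ _; case: fB => sB _ _.
  apply: (gen_min hD (sum_submod hD sA sB)) => i hi.
  exists (nth 0 ms i), (nth 0 s i - nth 0 ms i); split; last by ring.
  + apply: (st_ext hD hst (gen_frac hD nzA)).
    by apply: (gen_in hD (i := i.+1)) => /=; rewrite hsz.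
  + have [_ [d [hd ->]]] := hms i hi.
    apply: (st_ext hD hst (gen_frac hD nzB)).
    apply: (principal_in_gen (a := p)); [by right; left | by exists d].
Qed.


Lemma coprime_part g a b : g != 0 -> D a -> D b -> a != 0 ->
  st (sp D (g * a) (g * b)) = principal D g -> st (sp D a b) = D.
Proof.
move=> g0 ha hb a0 e; apply: (scale_inj hD g0).
rewrite -(st_scale hD hst g0 (sp_frac hD ha hb a0)) (scale_sp hD) e.
by rewrite -[in RHS](principal1 hD) (scale_principal hD) mulr1.
Qed.

Lemma sp_ft a b : D a -> D b -> a != 0 -> finite_type D st (st (sp D a b)).
Proof. by move=> ha hb a0; rewrite (sp_gen hD); apply: ft_gen; apply: (gen_nz (a := a)) => //; left. Qed.

Lemma bez_step a c : good a -> D c -> c != 0 ->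
  (forall b, D b -> exists h, st (sp D c b) = principal D h) ->
  forall b, D b -> exists g, st (sp D (a * c) b) = principal D g.
Proof.
move=> [ha a0 [[hhom hpr] _]] hc c0 IH b hb.
have ssub : forall x y, Dsubmodule D (sp D x y) := fun x y => sum_submod hD (principal_sub hD x) (principal_sub hD y).
have fab := sp_frac hD ha hb a0.
have [g eg] : exists g, st (sp D a b) = principal D g.
  have [g hg] := hpr _ (sp_ft ha hb a0) (fun z hz => st_ext hD hst fab (sum_l hD (principal_sub hD b) hz)).
  by exists g; apply: seteq_eq.
have ag : principal D g a by rewrite -eg; apply: (st_ext hD hst fab); exact: (sp_in_l hD).
have bg : principal D g b by rewrite -eg; apply: (st_ext hD hst fab); exact: (sp_in_r hD).
case: ag => a' [ha' ea]; case: bg => b' [hb' eb].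
have g0 : g != 0 by apply: contraNneq a0 => g0; rewrite ea g0 mul0r.
have a'0 : a' != 0 by apply: contraNneq a0 => e; rewrite ea e mulr0.
have cop : st (sp D a' b') = D by apply: (coprime_part g0) => //; rewrite -ea -eb.
have [h eh] := IH b' hb'.
have hac : D (a' * c) by apply: (Dmul hD).
have ac0 : a' * c != 0 by rewrite mulf_neq0.
have fT := sp_frac hD hac hb' ac0.
have fcb := sp_frac hD hc hb' c0.
have eT : st (sp D (a' * c) b') = principal D h.
  rewrite -eh; apply: seteq_eq => z; split.
  - move=> hz; have hm := st_mono hD hst fT fcb; apply: (hm _ z hz).
    apply: (sp_min hD (ssub c b')); last exact: (sp_in_r hD).
    have [_ _ hmu] := ssub c b'; apply: hmu => //; exact: (sp_in_l hD).
  - have fsT := st_frac hD hst fT.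
    apply: (st_below hD hst fcb fsT (st_idem hD hst fT)).
    case: (fsT) => sT _ _; apply: (sp_min hD sT); last first.
      by apply: (st_ext hD hst fT); exact: (sp_in_r hD).
    have : scale c (st (sp D a' b')) c by exists 1; rewrite mulr1 cop; split => //; exact: (D1 hD).
    rewrite -(st_scale hD hst c0 (sp_frac hD ha' hb' a'0)) (scale_sp hD).
    have fca : frac_ideal D (sp D (c * a') (c * b')).
      by apply: (sp_frac hD); [exact: (Dmul hD) | exact: (Dmul hD) | rewrite mulf_neq0].
    have hm := st_mono hD hst fca fT; apply: hm.
    apply: (sp_min hD (ssub _ _)); first by rewrite mulrC; exact: (sp_in_l hD).
    have [_ _ hmu] := ssub (a' * c) b'; apply: hmu => //; exact: (sp_in_r hD).
exists (g * h).
rewrite ea eb; have -> : g * a' * c = g * (a' * c) by ring.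
by rewrite -(scale_sp hD) (st_scale hD hst g0 fT) eT (scale_principal hD).
Qed.


Lemma prime_exp (Q : K -> Prop) z n : (forall a b, D a -> D b -> Q (a * b) -> Q a \/ Q b) ->
  proper Q -> D z -> Q (z ^+ n) -> Q z.
Proof.
move=> hQ qp hz; elim: n => [|n IH]; first by rewrite expr0.
by rewrite exprS => /hQ []; [ | exact: (Dexp hD) | | apply: IH].
Qed.

Lemma unit_notin (Q : K -> Prop) u : Dsubmodule D Q -> proper Q -> u != 0 -> D u^-1 -> ~ Q u.
Proof. by move=> [_ _ hm] qp u0 hu' qu; apply: qp; rewrite -(mulVf u0); apply: hm. Qed.

Section C1.
Hypothesis c1 : cond1 D st.

Lemma fact_all x : D x -> x != 0 -> exists la u,
  [/\ D u, D u^-1, x = u * \prod_(a <- la) a & forall a, List.In a la -> good a].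
Proof.
move=> hx x0; case: (classic (D x^-1)) => hxi.
  by exists [::], x; rewrite big_nil mulr1; split.
have [l [hl e]] := c1 hx x0 hxi.
have [la ela] : exists la, l = map (principal D) la.
  by apply: list_principal => I hI; exact: fhomog_principal (proj1 (hl I hI)).
have hg : forall a, List.In a la -> good a.
  by move=> a ha; apply: good_of; apply: hl; rewrite ela; exact: List.in_map.
have p0 : \prod_(a <- la) a != 0 by apply: prod_neq0 => a /hg [].
move: (seteq_eq e); rewrite ela prod_principal (st_princ hD hst p0) => {}e.
have : principal D x x by exact: (principal_self hD).
rewrite e => -[d [hd ex]].
have : principal D (\prod_(a <- la) a) (\prod_(a <- la) a) by exact: (principal_self hD).
rewrite -e => -[f [hf ep]].
have d0 : d != 0 by apply: contraNneq x0 => d0; rewrite ex d0 mulr0.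
have h1 : x * (f * d) = x by rewrite mulrA -ep -ex.
have fd : f * d = 1 by apply: (mulfI x0); rewrite h1 mulr1.
have fe : f = d^-1 by apply: (mulIf d0); rewrite fd mulVf.
by exists la, d; split => //; [rewrite -fe | rewrite ex mulrC].
Qed.

Lemma good_D la : (forall a, List.In a la -> good a) -> forall a, List.In a la -> D a.
Proof. by move=> hg a /hg []. Qed.

Lemma bez_list la : (forall a, List.In a la -> good a) -> forall u, D u -> u != 0 -> D u^-1 ->
  forall b, D b -> exists g, st (sp D (u * \prod_(a <- la) a) b) = principal D g.
Proof.
elim: la => [|a la IH] hg u hu u0 hu' b hb.
- rewrite big_nil mulr1; exists 1; rewrite (principal1 hD).
  have -> : sp D u b = D.
    apply: seteq_eq => z; split; first exact: (sp_int hD hu hb).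
    move=> hz; exists (u * (u^-1 * z)), 0; split.
    + by exists (u^-1 * z); split => //; apply: (Dmul hD).
    + by exists 0; rewrite mulr0; split => //; exact: (D0 hD).
    + by rewrite addr0 mulrA mulfV // mul1r.
  exact: (st_D hD hst).
- have hg' : forall y, List.In y la -> good y by move=> y hy; apply: hg; right.
  rewrite big_cons mulrCA; apply: bez_step => //.
  + by apply: hg; left.
  + apply: (Dmul hD) => //; apply: (Dprod_seq hD) => y hy; exact: (good_D hg' hy).
  + by rewrite mulf_neq0 //; apply: prod_neq0 => y /hg' [].
  + by move=> b' hb'; apply: IH.
Qed.

Lemma bez_all a b : D a -> a != 0 -> D b -> exists g, st (sp D a b) = principal D g.
Proof.
move=> ha a0 hb; have [la [u [hu hu' ea hg]]] := fact_all ha a0.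
have u0 : u != 0 by apply: contraNneq a0 => u0; rewrite ea u0 mul0r.
by rewrite ea; apply: bez_list.
Qed.

Lemma reduce a b : D a -> D b -> a != 0 -> exists g a' b',
  [/\ g != 0, D a', D b', a = g * a' & b = g * b'] /\ st (sp D a' b') = D.
Proof.
move=> ha hb a0; have [g eg] := bez_all ha a0 hb.
have fab := sp_frac hD ha hb a0.
have ag : principal D g a by rewrite -eg; apply: (st_ext hD hst fab); exact: (sp_in_l hD).
have bg : principal D g b by rewrite -eg; apply: (st_ext hD hst fab); exact: (sp_in_r hD).
case: ag => a' [ha' ea]; case: bg => b' [hb' eb].
have g0 : g != 0 by apply: contraNneq a0 => g0; rewrite ea g0 mul0r.
have a'0 : a' != 0 by apply: contraNneq a0 => e; rewrite ea e mulr0.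
exists g, a', b'; split => //.
by apply: (coprime_part g0) => //; rewrite -ea -eb.
Qed.

Lemma val_max P : max_star D st P -> valuation (loc D P).
Proof.
move=> hP z z0; have [a [b [ha hb b0 ez]]] := Dfrac hD z.
have a0 : a != 0 by apply: contraNneq z0 => a0; rewrite ez a0 mul0r.
have [g [a' [b' [[g0 ha' hb' ea eb] cop]]]] := reduce ha hb a0.
have a'0 : a' != 0 by apply: contraNneq a0 => e; rewrite ea e mulr0.
have b'0 : b' != 0 by apply: contraNneq b0 => e; rewrite eb e mulr0.
have ez' : z = a' / b' by rewrite ez ea eb; field; rewrite g0 b'0.
case: (classic (P b')) => pb'.
- case: (classic (P a')) => pa'.
  + by exfalso; exact: (coprime_notboth hD hst hP ha' hb' a'0 cop pa' pb').
  + by right; rewrite ez' invf_div; exact: (loc_frac hD hst hP hb' ha' pa').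
- by left; rewrite ez'; exact: (loc_frac hD hst hP ha' hb' pb').
Qed.

Lemma int_loc z : D z <-> (forall P, max_star D st P -> loc D P z).
Proof.
split; first by move=> hz P hP; exact: (loc_D hD hst hP).
move=> h; have [a [b [ha hb b0 ez]]] := Dfrac hD z.
case: (eqVneq a 0) => [a0|a0]; first by rewrite ez a0 mul0r; exact: (D0 hD).
have [g [a' [b' [[g0 ha' hb' ea eb] cop]]]] := reduce ha hb a0.
have a'0 : a' != 0 by apply: contraNneq a0 => e; rewrite ea e mulr0.
have b'0 : b' != 0 by apply: contraNneq b0 => e; rewrite eb e mulr0.
have ez' : z = a' / b' by rewrite ez ea eb; field; rewrite g0 b'0.
case: (classic (D b'^-1)) => hbi; first by rewrite ez'; exact: (Dmul hD ha' hbi).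
exfalso; have [la [u [hu hu' eb' hg]]] := fact_all hb' b'0.
case: la eb' hg => [|al la] eb' hg.
  by apply: hbi; rewrite eb' big_nil mulr1.
have [hal al0 [_ [_ [M [hM sM _]]]]] := hg al (or_introl erefl).
have Mal : M al by apply: sM; exact: (principal_self hD).
have hg' : forall y, List.In y la -> good y by move=> y hy; apply: hg; right.
have Mb' : M b'.
  rewrite eb' big_cons mulrCA; apply: (max_mulr hD hst hM) => //.
  apply: (Dmul hD) => //; apply: (Dprod_seq hD) => y hy; exact: (good_D hg' hy).
have Ma' : M a' by apply: (loc_P hD hst hM ha' Mb' b'0); rewrite -ez'; apply: h.
exact: (coprime_notboth hD hst hM ha' hb' a'0 cop Ma' Mb').
Qed.

Lemma locfin x : D x -> x != 0 -> exists l : seq (K -> Prop),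
  forall P, max_star D st P -> P x -> exists Q, List.In Q l /\ seteq P Q.
Proof.
move=> hx x0; have [la [u [hu hu' ex hg]]] := fact_all hx x0.
have u0 : u != 0 by apply: contraNneq x0 => u0; rewrite ex u0 mul0r.
have [f hf] := fun_choice (fun _ : K => False) (R := fun a M => max_star D st M /\ M a) (s := la)
   (fun a ha => match hg a ha with And3 _ _ (conj _ (conj _ (ex_intro M (And3 hM sM _)))) =>
      ex_intro _ M (conj hM (sM a (principal_self hD a))) end).
exists (map f la) => P hP Px.
have := prime_list hD (max_prime hD hst hP) hu (good_D hg); rewrite -ex => /(_ Px) [Pu | [a [ha Pa]]].
  by exfalso; exact: (max_unit hD hst hP u0 hu hu' Pu).
exists (f a); split; first exact: List.in_map.
have [hfa1 hfa2] := hf a ha.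
by rewrite (good_uniq (hg a ha) hP hfa1 Pa hfa2).
Qed.

Lemma good_in_prime Q : prime_ideal D Q -> nonzero Q -> exists a, good a /\ Q a.
Proof.
move=> [qs qi qp qprime] [q [Qq q0]].
have [la [u [hu hu' eq hg]]] := fact_all (qi q Qq) q0.
have u0 : u != 0 by apply: contraNneq q0 => u0; rewrite eq u0 mul0r.
have := prime_list hD qprime hu (good_D hg); rewrite -eq => /(_ Qq) [Qu | [a [ha Qa]]].
  by exfalso; exact: (unit_notin qs qp u0 hu' Qu).
by exists a; split => //; apply: hg.
Qed.

Lemma ht1 P : max_star D st P -> height_one D P.
Proof.
move=> hP; split.
- split; [exact: (max_sub hD hst hP) | exact: (max_int hD hst hP) | exact: (max_proper hD hst hP) | ].
  by move=> a b ha hb; exact: (max_prime hD hst hP).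
- by case: (max_frac hD hst hP).
- move=> Q hQ nzQ sQP z; split; first exact: sQP.
  have [a [ga Qa]] := good_in_prime hQ nzQ.
  have [ha a0 [_ [_ [M [hM sM ht]]]]] := ga.
  have Ma : M a by apply: sM; exact: (principal_self hD).
  have eM := good_uniq ga hP hM (sQP _ Qa) Ma; subst M.
  case: hQ => qs qi qp qprime.
  move=> Pz; case: (eqVneq z 0) => [-> | z0]; first by case: qs.
  have hz := max_int hD hst hP Pz.
  have [n [n1 hn]] := ht z Pz z0.
  have : principal D a (z ^+ n).
    apply: hn; last exact: (Dexp hD).
    by exists 1; split; [exact: (loc_1 hD hst hP) | rewrite mulr1].
  case=> d [hd ezn].
  have Qzn : Q (z ^+ n) by rewrite ezn mulrC; case: qs => _ _ hm; apply: hm.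
  exact: (prime_exp qprime qp hz Qzn).
Qed.

Lemma one_two : cond2 D st.
Proof.
split.
- move=> a b ha hb a0 b0; have [g eg] := bez_all ha a0 hb.
  have fab := sp_frac hD ha hb a0.
  have ia := sp_int hD ha hb.
  exists g; split.
  + have : principal D g g := principal_self hD g.
    by rewrite -eg => /(st_int hD hst fab ia).
  + have : st (sp D a b) a by apply: (st_ext hD hst fab); exact: (sp_in_l hD).
    by rewrite eg => -[c [hc e]]; exists c.
  + have : st (sp D a b) b by apply: (st_ext hD hst fab); exact: (sp_in_r hD).
    by rewrite eg => -[c [hc e]]; exists c.
  + move=> e he [c [hc ea]] [c' [hc' eb]].
    have e0 : e != 0 by apply: contraNneq a0 => e0; rewrite ea e0 mul0r.
    have : st (sp D a b) g by rewrite eg; exact: (principal_self hD).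
    have hm := st_below hD hst fab (principal_frac hD e0) (st_princ hD hst e0).
    move/hm => h; apply: h.
    apply: (sp_min hD (principal_sub hD e)); [by exists c | by exists c'].
- split; last exact: ht1.
  split.
  + exact: val_max.
  + exact: int_loc.
  + exact: locfin.
  + move=> P1 P2 h1 h2 ne [Q [hQ nzQ s1 s2]].
    have [a [ga Qa]] := good_in_prime hQ nzQ.
    by apply: ne; rewrite (good_uniq ga h1 h2 (s1 _ Qa) (s2 _ Qa)).
Qed.

End C1.
End One.


Section Zorn.
Variable K : fieldType.
Variable D : K -> Prop.
Variable st : (K -> Prop) -> (K -> Prop).
Hypothesis hD : is_domain_in D.
Hypothesis hst : star_fc D st.

Lemma max_exists I : frac_ideal D I -> st I = I -> subset I D -> ~ I 1 ->
  exists P, max_star D st P /\ subset I P.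
Proof.
move=> fI sI iI nI.
have pI : pint_star D st I by split => //; split => //; rewrite sI.
pose Pf (X : K -> Prop) := (forall z, ~ X z) \/ (pint_star D st X /\ subset I X).
have [|A [PA hmax]] := @classical_sets.Zorn_bigcup K Pf.
- move=> F hF htot.
  case: (classic (exists X0, F X0 /\ exists z, X0 z)) => [[X0 [FX0 [z0 X0z0]]] | hno]; last first.
    by left => z [X FX Xz]; apply: hno; exists X; split => //; exists z.
  have memF : forall X z, F X -> X z -> pint_star D st X /\ subset I X.
    by move=> X z FX Xz; case: (hF X FX) => // h; exfalso; exact: h z Xz.
  have [pX0 IX0] := memF _ _ FX0 X0z0.
  pose U := fun z => exists2 X, F X & X z.
  have Uint : subset U D by move=> z [X FX Xz]; have [[_ h _] _] := memF _ _ FX Xz; apply: h.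
  have big : forall s : seq K, (forall y, y \in s -> U y) ->
      exists X, [/\ F X, pint_star D st X & forall y, y \in s -> X y].
    elim=> [|y s IH] hs; first by exists X0; split.
    have [X [FX pX hX]] := IH (fun w hw => hs w ltac:(by rewrite inE hw orbT)).
    have [Y FY Yy] := hs y (mem_head _ _).
    have [pY _] := memF _ _ FY Yy.
    case: (htot X Y FX FY) => sXY.
    + exists Y; split => // w; rewrite inE => /orP [/eqP -> // | /hX]; exact: sXY.
    + exists X; split => // w; rewrite inE => /orP [/eqP -> | /hX //]; exact: sXY.
  have Usub : Dsubmodule D U.
    split.
    - by exists X0 => //; case: pX0 => [[[[h _ _] _ _] _] _ _].
    - move=> y z hy hz.
      have [|X [FX [[[[_ hadd _] _ _] _] _ _] hX]] := big [:: y; z].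
        by move=> w; rewrite !inE => /orP [/eqP -> | /eqP ->].
      by exists X => //; apply: hadd; apply: hX; rewrite !inE eqxx ?orbT.
    - move=> d z hd [X FX Xz].
      have [[[[_ _ hm] _ _] _] _ _] := (memF _ _ FX Xz).1.
      by exists X => //; apply: hm.
  have fU : frac_ideal D U.
    apply: (frac_int hD Usub) => //.
    case: pX0 => [[[_ [w [hw w0]] _] _] _ _]; by exists w; split => //; exists X0.
  rewrite /Pf; right; change (pint_star D st U /\ subset I U).
  split; last by move=> z hz; exists X0 => //; apply: IX0.
  split => //; last first.
  + by move=> [X FX X1]; have [[_ _ h] _] := memF _ _ FX X1.
  split => // z; split; last exact: (st_ext hD hst fU).
  move/((st_fc hD hst z fU).1) => [J [[s hs] nzJ sJ stJ]].
  move: (seteq_eq hs) => eJ; subst J.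
  have [X [FX pX hX]] := big s (fun y hy => sJ y (gen_mem hD hy)).
  have [[fX sX] _ _] := pX.
  exists X => //.
  have sgX : subset (gen D s) X.
    apply: (gen_min hD) => [|i hi]; first by case: fX.
    by apply: hX; apply: mem_nth.
  have hm := st_mono hD hst (gen_frac hD nzJ) fX sgX.
  by apply: (sX z).1; exact: (hm z stJ).
- case: PA => [hA | [pA IA]].
    exfalso; apply: (hmax I); last by rewrite /Pf; right; split => // z.
    split; first by move=> z /hA.
    move=> sIA; case: fI => _ [z [Iz _]] _; exact: hA z (sIA z Iz).
  exists A; split => //; split => // Q pQ sAQ.
  apply: NNPP => nQA; apply: (hmax Q); last by rewrite /Pf; right; split => // z /IA /sAQ.
  by split.
Qed.

End Zorn.


Lemma cross (K : fieldType) (a b c d : K) : b != 0 -> d != 0 -> a / b = c / d -> a * d = c * b.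
Proof.
move=> b0 d0 e.
have -> : a * d = a / b * (b * d) by field.
by rewrite e; field.
Qed.

Section Two.
Variable K : fieldType.
Variable D : K -> Prop.
Variable st : (K -> Prop) -> (K -> Prop).
Hypothesis hD : is_domain_in D.
Hypothesis hst : star_fc D st.
Hypothesis hgcd : gcd_domain D.
Hypothesis hirkt : star_IRKT D st.
Hypothesis hht : forall P, max_star D st P -> height_one D P.

Lemma hval P : max_star D st P -> valuation (loc D P).
Proof. by case: hirkt => h _ _ _; apply: h. Qed.
Lemma hint z : D z <-> (forall P, max_star D st P -> loc D P z).
Proof. by case: hirkt => _ h _ _; apply: h. Qed.

Lemma rank1 P x y : max_star D st P -> P x -> x != 0 -> P y -> exists n, loc D P (y ^+ n / x).
Proof.
move=> hP px x0 py.
have hv := hval hP.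
pose Q := fun z => D z /\ exists n, loc D P (z ^+ n / x).
have hx := max_int hD hst hP px.
have hV1 := loc_1 hD hst hP.
have Q0 : Q 0.
  by split; [exact: (D0 hD) | exists 1%N; rewrite expr1 mul0r; apply: (loc_D hD hst hP); exact: (D0 hD)].
have hQ : prime_ideal D Q.
  split.
  - split => //.
    + move=> a b [ha [n hn]] [hb [m hm]]; split; first exact: (Dadd hD).
      case: (eqVneq a 0) => [-> | a0]; first by rewrite add0r; exists m.
      case: (eqVneq b 0) => [-> | b0]; first by rewrite addr0; exists n.
      have ba0 : b / a != 0 by rewrite mulf_neq0 ?invr_eq0.
      case: (hv _ ba0) => hw.
      * exists n.
        have -> : a + b = a * (1 + b / a) by field.
        rewrite exprMn mulrAC; apply: (loc_mul hD hst hP) => //.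
        by apply: (loc_exp hD hst hP); apply: (loc_add hD hst hP).
      * rewrite invf_div in hw; exists m.
        have -> : a + b = b * (1 + a / b) by field.
        rewrite exprMn mulrAC; apply: (loc_mul hD hst hP) => //.
        by apply: (loc_exp hD hst hP); apply: (loc_add hD hst hP).
    + move=> d z hd [hz [n hn]]; split; first exact: (Dmul hD).
      exists n; rewrite exprMn -mulrA; apply: (loc_mul hD hst hP) => //.
      by apply: (loc_D hD hst hP); apply: (Dexp hD).
  - by move=> z [].
  - move=> [_ [n hn]]; apply: (max_proper hD hst hP).
    by apply: (loc_P hD hst hP (D1 hD) px x0); rewrite -(expr1n _ n).
  - move=> a b ha hb [_ [n hn]].
    case: (eqVneq a 0) => [-> | a0]; first by left.
    case: (eqVneq b 0) => [-> | b0]; first by right.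
    have ba0 : b / a != 0 by rewrite mulf_neq0 ?invr_eq0.
    case: (hv _ ba0) => hw.
    * right; split => //; exists (n + n)%N.
      have -> : b ^+ (n + n) / x = ((a * b) ^+ n / x) * (b / a) ^+ n.
        by rewrite exprD exprMn expr_div_n; field; rewrite expf_neq0.
      by apply: (loc_mul hD hst hP) => //; apply: (loc_exp hD hst hP).
    * left; split => //; exists (n + n)%N; rewrite invf_div in hw.
      have -> : a ^+ (n + n) / x = ((a * b) ^+ n / x) * (a / b) ^+ n.
        by rewrite exprD exprMn expr_div_n; field; rewrite expf_neq0.
      by apply: (loc_mul hD hst hP) => //; apply: (loc_exp hD hst hP).
have nzQ : nonzero Q by exists x; split => //; split => //; exists 1%N; rewrite expr1 mulfV.
have sQP : subset Q P.
  move=> z [hz [n hn]]; apply: (max_exp hD hst hP (n := n)) => //.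
  exact: (loc_P hD hst hP (Dexp hD _ hz) px x0 hn).
have [_ _ h] := hht hP.
by have [_ [n hn]] := (h Q hQ nzQ sQP y).2 py; exists n.
Qed.


Lemma divides_trans a b c : divides D a b -> divides D b c -> divides D a c.
Proof. move=> [u [hu ->]] [v [hv ->]]; exists (u * v); split; [exact: (Dmul hD) | by rewrite mulrA]. Qed.
Lemma divides0 a : divides D a 0.
Proof. by exists 0; split; [exact: (D0 hD) | rewrite mulr0]. Qed.
Lemma divides_refl a : divides D a a.
Proof. by exists 1; split; [exact: (D1 hD) | rewrite mulr1]. Qed.

Lemma gcd_list (s : seq K) : (forall y, y \in s -> D y) -> (exists2 y, y \in s & y != 0) ->
  exists g, [/\ D g, g != 0, forall y, y \in s -> divides D g y &
    forall e, D e -> (forall y, y \in s -> divides D e y) -> divides D e g].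
Proof.
elim: s => [|x s IH] hs hnz; first by case: hnz.
have hx : D x by apply: hs; exact: mem_head.
have hs' : forall y, y \in s -> D y by move=> y hy; apply: hs; rewrite inE hy orbT.
case: (classic (exists2 y, y \in s & y != 0)) => hnz'.
- have [g [hg g0 hdiv huniv]] := IH hs' hnz'.
  case: (eqVneq x 0) => [x0 | x0].
  + exists g; split => //.
    * by move=> y; rewrite inE => /orP [/eqP -> | /hdiv //]; rewrite x0; exact: divides0.
    * by move=> e he hd; apply: huniv => // y hy; apply: hd; rewrite inE hy orbT.
  + have [d [hd hdx hdg hdu]] := hgcd hx hg x0 g0.
    exists d; split => //.
    * by apply: contraNneq x0 => d0; case: hdx => c [_ ->]; rewrite d0 mul0r.
    * move=> y; rewrite inE => /orP [/eqP -> // | /hdiv]; exact: divides_trans.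
    * move=> e he hde; apply: hdu => //; first by apply: hde; exact: mem_head.
      by apply: huniv => // y hy; apply: hde; rewrite inE hy orbT.
- have s0 : forall y, y \in s -> y = 0.
    by move=> y hy; apply: NNPP => ny; apply: hnz'; exists y => //; apply/eqP.
  have x0 : x != 0.
    by case: hnz => y; rewrite inE => /orP [/eqP -> // | /s0 ->]; rewrite eqxx.
  exists x; split => //.
  + by move=> y; rewrite inE => /orP [/eqP -> | /s0 ->]; [exact: divides_refl | exact: divides0].
  + by move=> e he hde; apply: hde; exact: mem_head.
Qed.

Lemma minval P (t : seq K) : max_star D st P -> (exists2 y, y \in t & y != 0) ->
  exists2 m, m \in t & m != 0 /\ forall y, y \in t -> loc D P (y / m).
Proof.
move=> hP; have hv := hval hP.
have V0 : loc D P 0 by apply: (loc_D hD hst hP); exact: (D0 hD).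
elim: t => [|x t IH] hnz; first by case: hnz.
case: (classic (exists2 y, y \in t & y != 0)) => hnz'.
- have [m mt [m0 hm]] := IH hnz'.
  case: (eqVneq x 0) => [x0 | x0].
    exists m; first by rewrite inE mt orbT.
    by split => // y; rewrite inE => /orP [/eqP -> | /hm //]; rewrite x0 mul0r.
  have xm0 : x / m != 0 by rewrite mulf_neq0 ?invr_eq0.
  case: (hv _ xm0) => hw.
    exists m; first by rewrite inE mt orbT.
    by split => // y; rewrite inE => /orP [/eqP -> | /hm //].
  rewrite invf_div in hw.
  exists x; first exact: mem_head.
  split => // y; rewrite inE => /orP [/eqP -> | /hm hy]; first by rewrite mulfV //; exact: (loc_1 hD hst hP).
  have -> : y / x = (y / m) * (m / x) by rewrite mulrA divfK.
  exact: (loc_mul hD hst hP).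
- have s0 : forall y, y \in t -> y = 0.
    by move=> y hy; apply: NNPP => ny; apply: hnz'; exists y => //; apply/eqP.
  have x0 : x != 0.
    by case: hnz => y; rewrite inE => /orP [/eqP -> // | /s0 ->]; rewrite eqxx.
  exists x; first exact: mem_head.
  split => // y; rewrite inE => /orP [/eqP -> | /s0 ->]; last by rewrite mul0r.
  by rewrite mulfV //; exact: (loc_1 hD hst hP).
Qed.

Lemma denoms P m (t : seq K) : max_star D st P -> m != 0 -> (forall y, y \in t -> loc D P (y / m)) ->
  exists U, [/\ D U, ~ P U & forall y, y \in t -> divides D m (U * y)].
Proof.
move=> hP m0; elim: t => [|y t IH] hm.
  by exists 1; split => //; [exact: (D1 hD) | exact: (max_proper hD hst hP)].
have [U [hU nU hUd]] := IH (fun w hw => hm w ltac:(by rewrite inE hw orbT)).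
have [c [s [hc hs ns e]]] := hm y (mem_head _ _).
have s0 := loc_s0 hD hst hP ns.
have e' := cross m0 s0 e.
exists (U * s); split; [exact: (Dmul hD) | exact: (max_nmul hD hst hP) | ].
move=> w; rewrite inE => /orP [/eqP -> | hw].
- exists (U * c); split; first exact: (Dmul hD).
  have -> : U * s * y = U * (y * s) by ring.
  by rewrite e'; ring.
- have [k [hk ek]] := hUd w hw.
  exists (k * s); split; first exact: (Dmul hD).
  by rewrite mulrAC ek mulrA.
Qed.

Lemma loc_coprime P (t : seq K) : max_star D st P -> (forall y, y \in t -> D y) -> (exists2 y, y \in t & y != 0) ->
  (forall e, D e -> (forall y, y \in t -> divides D e y) -> D e^-1) -> exists2 y, y \in t & ~ P y.
Proof.
move=> hP ht hnz hunit.
have [m mt [m0 hm]] := minval hP hnz.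
have [U [hU nU hUd]] := denoms hP m0 hm.
have U0 := loc_s0 hD hst hP nU.
pose tu := map (fun y => U * y) t.
have htu : forall y, y \in tu -> D y.
  by move=> y /mapP [z hz ->]; apply: (Dmul hD) => //; apply: ht.
have nztu : exists2 y, y \in tu & y != 0.
  by exists (U * m); [exact: map_f | rewrite mulf_neq0].
have [g [hg g0 hdiv huniv]] := gcd_list htu nztu.
have [k [hk ek]] : divides D U g.
  apply: huniv => //; move=> y /mapP [z hz ->]; exists z; split => //; exact: ht.
have k0 : k != 0 by apply: contraNneq g0 => k0; rewrite ek k0 mulr0.
have hk' : D k^-1.
  apply: hunit => // y hy.
  have [c [hc ec]] := hdiv (U * y) (map_f _ hy).
  exists c; split => //; apply: (mulfI U0); by rewrite ec ek mulrA.
have [w [hw ew]] : divides D m g.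
  by apply: huniv; [exact: ht | move=> y /mapP [z hz ->]; apply: hUd].
exists m => // pm; apply: nU.
have -> : U = m * (w * k^-1).
  have : U * k = m * w by rewrite -ek -ew.
  by move=> h; apply: (mulIf k0); rewrite h; field.
by apply: (max_mulr hD hst hP) => //; apply: (Dmul hD).
Qed.

Lemma gen_nz_mem (s : seq K) : nonzero (gen D s) -> exists2 y, y \in s & y != 0.
Proof.
move=> [z [[c [hc ez]] z0]]; apply: NNPP => h; apply: (negP z0); apply/eqP; rewrite ez big1 // => i _.
have : nth 0 s i = 0.
  apply: NNPP => ne; apply: h; exists (nth 0 s i); [exact: mem_nth | exact/eqP].
by move=> ->; rewrite mulr0.
Qed.

Lemma mem_nz (t : seq K) : (exists2 y, y \in t & y != 0) -> nonzero (gen D t).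
Proof. by case=> y yt y0; exists y; split => //; exact: (gen_mem hD yt). Qed.

Lemma st_gen_D (t : seq K) : (forall y, y \in t -> D y) -> (exists2 y, y \in t & y != 0) ->
  (forall e, D e -> (forall y, y \in t -> divides D e y) -> D e^-1) -> st (gen D t) = D.
Proof.
move=> ht hnz hunit.
have nzg := mem_nz hnz.
have fg := gen_frac hD nzg.
have ig : subset (gen D t) D by apply: (gen_int hD) => i hi; apply: ht; exact: mem_nth.
apply: (st_one hD hst fg ig).
apply: NNPP => n1.
have [P [hP sP]] := max_exists hD hst (st_frac hD hst fg) (st_idem hD hst fg) (st_int hD hst fg ig) n1.
have [y yt ny] := loc_coprime hP ht hnz hunit.
apply: ny; apply: sP; apply: (st_ext hD hst fg); exact: (gen_mem hD yt).
Qed.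

Lemma ft_principal J : finite_type D st J -> is_principal D J.
Proof.
move=> [[fJ _] [J0 [[s hs] nz eJ]]].
move: (seteq_eq hs) (seteq_eq eJ) => e0 e1; subst J0 J.
have [d [hd d0 hds]] := common_denom hD s.
pose t := map (fun y => d * y) s.
have ht : forall y, y \in t -> D y.
  move=> y /(nthP 0) [i hi <-]; rewrite /t size_map in hi; rewrite /t (nth_map 0) //; exact: hds.
have nzt : nonzero (gen D t).
  rewrite /t (gen_map hD); case: nz => z [hz z0]; exists (d * z); split; [by exists z | by rewrite mulf_neq0].
have [y0 y0t y00] := gen_nz_mem nzt.
have [g [hg g0 hdiv huniv]] := gcd_list ht (ex_intro2 _ _ y0 y0t y00).
pose t' := map (fun y => y / g) t.
have ht' : forall y, y \in t' -> D y.
  by move=> y /mapP [z zt ->]; have [c [hc ->]] := hdiv z zt; rewrite mulrC mulKf.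
have et : t = map (fun y => g * y) t'.
  by rewrite /t' -map_comp -[LHS]map_id; apply: eq_map => w /=; rewrite mulrC divfK.
have nzt' : exists2 y, y \in t' & y != 0.
  by exists (y0 / g); [exact: map_f | rewrite mulf_neq0 ?invr_eq0].
have hunit : forall e, D e -> (forall y, y \in t' -> divides D e y) -> D e^-1.
  move=> e he hde.
  have : divides D (g * e) g.
    apply: huniv; first exact: (Dmul hD).
    move=> w wt; have [c [hc ec]] := hde (w / g) (map_f _ wt).
    by exists c; split => //; rewrite -mulrA -ec mulrC divfK.
  case=> c [hc ec].
  have h : e * c = 1 by apply: (mulfI g0); rewrite mulrA -ec mulr1.
  have e0 : e != 0 by apply/eqP => e0; move: h; rewrite e0 mul0r => /esym/eqP; rewrite oner_eq0.
  by rewrite (_ : e^-1 = c) //; apply: (mulfI e0); rewrite h mulfV.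
have stD := st_gen_D ht' nzt' hunit.
have fs : frac_ideal D (gen D s) := gen_frac hD nz.
have ft' := gen_frac hD (mem_nz nzt').
have e : scale d (st (gen D s)) = principal D g.
  rewrite -(st_scale hD hst d0 fs) -(gen_map hD); rewrite -/t; rewrite et (gen_map hD) (st_scale hD hst g0 ft') stD.
  by rewrite -[in RHS](mulr1 g) -(scale_principal hD) (principal1 hD).
have E : st (gen D s) = principal D (g / d).
  by apply: (scale_inj hD d0); rewrite e (scale_principal hD); congr (principal D); field.
by exists (g / d); rewrite E => z.
Qed.
End Two.


Lemma forall2_choice (A B : Type) (R : A -> B -> Prop) (l : seq A) :
  (forall a, List.In a l -> exists b, R a b) -> exists lb, List.Forall2 R l lb.
Proof.
elim: l => [|a l IH] h; first by exists [::]; constructor.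
have [b hb] := h a (or_introl erefl).
have [lb hlb] := IH (fun a' ha' => h a' (or_intror ha')).
by exists (b :: lb); constructor.
Qed.

Lemma forall2_in_r (A B : Type) (R : A -> B -> Prop) l lb b :
  List.Forall2 R l lb -> List.In b lb -> exists a, List.In a l /\ R a b.
Proof.
elim=> [|a b' l' lb' hab _ IH] //= [<- | hb]; first by exists a; split => //; left.
by have [a' [ha' h]] := IH hb; exists a'; split => //; right.
Qed.

Lemma gen1 (K : fieldType) (D : K -> Prop) d : gen D [:: d] = principal D d.
Proof.
apply: seteq_eq => z; split.
- by case=> c [hc ->]; rewrite big_ord1 /=; exists (c 0%N); rewrite mulrC.
- by case=> c [hc ->]; exists (fun _ => c); split => //; rewrite big_ord1 /= mulrC.
Qed.

Section Two2.
Variable K : fieldType.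
Variable D : K -> Prop.
Variable st : (K -> Prop) -> (K -> Prop).
Hypothesis hD : is_domain_in D.
Hypothesis hst : star_fc D st.
Hypothesis hgcd : gcd_domain D.
Hypothesis hirkt : star_IRKT D st.
Hypothesis hht : forall P, max_star D st P -> height_one D P.

Lemma dedupe x (l0 : seq (K -> Prop)) : exists L, List.NoDup L /\
  forall P, List.In P L <-> (List.In P l0 /\ max_star D st P /\ P x).
Proof.
elim: l0 => [|Q l0 [L' [nd h]]].
  by exists [::]; split; [constructor | move=> P; split => // -[]].
case: (classic (max_star D st Q /\ Q x /\ ~ List.In Q L')) => [[hQ [Qx nQ]] | hn].
- exists (Q :: L'); split; first by constructor.
  move=> P; split.
  + case=> [<- | /h [h1 h2]]; [by split => //; left | by split => //; right].
  + case=> [[<- | hP] h2]; first by left.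
    by right; apply/h.
- exists L'; split => // P; split.
  + by move/h => [h1 h2]; split => //; right.
  + case=> [[eQ | hP] [h2 h3]]; last by apply/h.
    subst P; apply: NNPP => nin; exact: hn.
Qed.

Lemma listL x : D x -> x != 0 -> exists L, List.NoDup L /\
  forall P, List.In P L <-> (max_star D st P /\ P x).
Proof.
move=> hx x0; case: hirkt => _ _ hlf _.
have [l0 hl0] := hlf x hx x0.
have [L [nd h]] := dedupe x l0.
exists L; split => // P; split; first by move/h => [_ ?].
move=> [hP Px]; apply/h; split => //.
by have [Q [hQ eQ]] := hl0 P hP Px; rewrite (seteq_eq eQ).
Qed.

Lemma dP P x (L' : seq (K -> Prop)) : max_star D st P -> P x -> x != 0 ->
  (forall Q, List.In Q L' -> max_star D st Q) ->
  exists e, [/\ D e, e != 0, divides D e x & loc D P (e / x)] /\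
    forall Q, List.In Q L' -> Q <> P -> ~ Q e.
Proof.
move=> hP px x0; have hx := max_int hD hst hP px.
elim: L' => [|Q L' IH] hL.
  exists x; split; last by move=> Q [].
  split => //; first exact: (divides_refl hD hst hgcd hirkt hht).
  by rewrite mulfV //; exact: (loc_1 hD hst hP).
have [e [[he e0 hex hel] hne]] := IH (fun Q' hQ' => hL Q' (or_intror hQ')).
case: (classic (Q = P)) => [eQ | nQ].
  by exists e; split => // Q' [<- // | hQ']; apply: hne.
have hQ := hL Q (or_introl erefl).
have [y [Py nQy]] : exists y, P y /\ ~ Q y.
  apply: NNPP => hn.
  have sPQ : subset P Q by move=> w Pw; apply: NNPP => nw; apply: hn; exists w.
  apply: nQ; apply: seteq_eq => z; split; last exact: sPQ.
  by case: hP => _ hm; exact: (hm Q (proj1 hQ) sPQ z).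
have hy := max_int hD hst hP Py.
have [n hn] := rank1 hD hst hgcd hirkt hht hP px x0 Py.
have hw : D (y ^+ n) := Dexp hD n hy.
have nQw : ~ Q (y ^+ n) by move=> /(max_exp hD hst hQ hy).
have w0 : y ^+ n != 0 by apply: contra_not_neq nQw => ->; exact: (max_0 hD hst hQ).
have [d [hd hde hdw hdu]] := hgcd he hw e0 w0.
case: (hde) => a' [ha' ea]; case: (hdw) => b' [hb' eb].
have d0 : d != 0 by apply: contraNneq e0 => d0; rewrite ea d0 mul0r.
have a'0 : a' != 0 by apply: contraNneq e0 => a0; rewrite ea a0 mulr0.
have b'0 : b' != 0 by apply: contraNneq w0 => b0; rewrite eb b0 mulr0.
exists d; split; last first.
  move=> Q' [<- _ | hQ' nQ'] hd'.
  - by apply: nQw; rewrite eb; exact: (max_mulr hD hst hQ).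
  - by apply: (hne Q' hQ' nQ'); rewrite ea; exact: (max_mulr hD hst (hL Q' (or_intror hQ'))).
split => //; first exact: (divides_trans hD hst hgcd hirkt hht hde hex).
have hunit : forall f, D f -> (forall z, z \in [:: a'; b'] -> divides D f z) -> D f^-1.
  move=> f hf hdf.
  have : divides D (d * f) d.
    apply: hdu; first exact: (Dmul hD).
    - have [c [hc ec]] := hdf a' (mem_head _ _); exists c; split => //; by rewrite ea ec mulrA.
    - have [c [hc ec]] := hdf b' ltac:(by rewrite !inE eqxx orbT); exists c; split => //; by rewrite eb ec mulrA.
  case=> c [hc ec].
  have h : f * c = 1 by apply: (mulfI d0); rewrite mulrA -ec mulr1.
  have f0 : f != 0 by apply/eqP => f0; move: h; rewrite f0 mul0r => /esym/eqP; rewrite oner_eq0.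
  by rewrite (_ : f^-1 = c) //; apply: (mulfI f0); rewrite h mulfV.
have [z hz nPz] := loc_coprime hD hst hgcd hirkt hht hP (t := [:: a'; b'])
  ltac:(by move=> z; rewrite !inE => /orP [/eqP -> | /eqP ->])
  ltac:(by exists a'; [exact: mem_head | ]) hunit.
move: hz; rewrite !inE => /orP [/eqP ez | /eqP ez]; subst z.
- have -> : d / x = (e / x) * a'^-1 by rewrite ea mulrAC mulfK.
  by apply: (loc_mul hD hst hP) => //; exact: (loc_inv hD hst hP).
- have -> : d / x = (y ^+ n / x) * b'^-1 by rewrite eb mulrAC mulfK.
  by apply: (loc_mul hD hst hP) => //; exact: (loc_inv hD hst hP).
Qed.



Lemma homog_d P d : max_star D st P -> D d -> d != 0 -> P d ->
  (forall Q, max_star D st Q -> Q d -> Q = P) -> fhomog_type1 D st (principal D d).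
Proof.
move=> hP hd d0 Pd huniq.
have fd := principal_frac hD d0.
have std := st_princ hD hst d0.
have sdP : subset (principal D d) P.
  by move=> z [c [hc ->]]; exact: (max_mulr hD hst hP).
have pd : pint_star D st (principal D d).
  split; [by split => //; rewrite std | exact: (principal_int hD) | ].
  by move=> /sdP; exact: (max_proper hD hst hP).
have ftd : finite_type D st (principal D d).
  split; first by split => //; rewrite std.
  by exists (principal D d); split => //; [exists [:: d]; rewrite gen1 | exists d; split => //; exact: (principal_self hD) | rewrite std].
have hom : homog D st (principal D d).
  split => // A B pA _ pB _ sA sB hs.
  have below : forall X, pint_star D st X -> subset (principal D d) X -> subset X P.
    move=> X [[fX sX] iX nX] sdX.
    have [R [hR sXR]] := max_exists hD hst fX (seteq_eq sX) iX nX.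
    have Rd : R d by apply: sXR; apply: sdX; exact: (principal_self hD).
    by rewrite -(huniq R hR Rd).
  have AP := below A pA sA; have BP := below B pB sB.
  case: pA => [[fA _] iA _]; case: pB => [[fB _] iB _].
  have fAB : frac_ideal D (sum_ideal A B).
    by apply: (sum_frac_int hD) => //; [case: fA | case: fB | case: fA].
  have sABP : subset (sum_ideal A B) P.
    by move=> z [a [b [ha hb ->]]]; apply: (max_add hD hst hP); [apply: AP | apply: BP].
  have : st (sum_ideal A B) 1 by apply/hs; exact: (D1 hD).
  move/(st_below hD hst fAB (max_frac hD hst hP) (max_st hD hst hP) sABP).
  exact: (max_proper hD hst hP).
split.
  by split => // J hJ _; exact: (ft_principal hD hst hgcd hirkt hht hJ).
split => //; exists P; split => // y Py y0.
have [n hn] := rank1 hD hst hgcd hirkt hht hP Pd d0 Py.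
have hy := max_int hD hst hP Py.
exists n.+1; split => // z [w [hw ->]] hz.
have hzd : D (y ^+ n.+1 * w / d).
  apply/(hint hD hst hgcd hirkt hht) => R hR.
  case: (classic (R = P)) => [-> | nR].
  - have -> : y ^+ n.+1 * w / d = (y ^+ n / d) * (y * w) by rewrite exprS; field.
    apply: (loc_mul hD hst hP) => //; apply: (loc_mul hD hst hP) => //; exact: (loc_D hD hst hP).
  - apply: (loc_mul hD hst hR); first exact: (loc_D hD hst hR).
    by apply: (loc_inv hD hst hR hd) => Rd; apply: nR; apply: huniq.
by exists (y ^+ n.+1 * w / d); split => //; field.
Qed.

Lemma in_map_inv (A B : Type) (f : A -> B) (l : seq A) y :
  List.In y (map f l) -> exists a, f a = y /\ List.In a l.
Proof.
elim: l => [|a l IH] //= [<- | h]; first by exists a; split => //; left.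
by have [a' [h1 h2]] := IH h; exists a'; split => //; right.
Qed.

Lemma two_one : cond1 D st.
Proof.
move=> x hx x0 nxi.
have [L [nd hL]] := listL hx x0.
pose R P d := [/\ D d, d != 0, divides D d x, loc D P (d / x) &
  forall Q, max_star D st Q -> Q d -> Q = P].
have hmaxL : forall Q, List.In Q L -> max_star D st Q by move=> Q /hL [].
have [ds hds] : exists ds, List.Forall2 R L ds.
  apply: forall2_choice => P /hL [hP Px].
  have [e [[he e0 hex hel] hne]] := dP hP Px x0 hmaxL.
  exists e; split => // Q hQ Qe.
  apply: NNPP => nQP; apply: (hne Q _ nQP Qe); apply/hL; split => //.
  by case: hex => c [hc ->]; exact: (max_mulr hD hst hQ).
have hdsP : forall d, List.In d ds -> exists P, [/\ max_star D st P, P x & R P d].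
  move=> d hd; have [P [hP hR]] := forall2_in_r hds hd.
  by have [hP1 hP2] := (hL P).1 hP; exists P.
have ds0 : forall d, List.In d ds -> d != 0 by move=> d /hdsP [P [_ _ []]].
have p0 : \prod_(d <- ds) d != 0 by apply: prod_neq0.
pose Vu Q z := loc D Q z /\ loc D Q z^-1.
have Vmul : forall Q, max_star D st Q -> forall a b, Vu Q a -> Vu Q b -> Vu Q (a * b).
  move=> Q hQ a b [h1 h2] [h3 h4]; split; first exact: (loc_mul hD hst hQ).
  by rewrite invfM; apply: (loc_mul hD hst hQ).
have key : forall Q, max_star D st Q ->
   (List.In Q L -> Vu Q (\prod_(d <- ds) d / x)) /\ (~ List.In Q L -> Vu Q (\prod_(d <- ds) d)).
  move=> Q hQ; elim: hds nd {hmaxL hdsP ds0 p0 hL} => [|P d L1 ds1 hPd hF IH] hnd.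
  - split => [[] | _]; rewrite big_nil; split; [exact: (loc_1 hD hst hQ) | rewrite invr1; exact: (loc_1 hD hst hQ)].
  - have [hnot hnd1] : ~ List.In P L1 /\ List.NoDup L1 by inversion hnd.
    have [IH1 IH2] := IH hnd1.
    case: hPd => hd d0 hdx hdl hu.
    rewrite big_cons.
    case: (classic (P = Q)) => [ePQ | nPQ].
    + subst Q; split => [_ | []]; last by left.
      have -> : d * \prod_(d <- ds1) d / x = (d / x) * \prod_(d <- ds1) d by rewrite mulrAC.
      apply: Vmul => //; last exact: IH2.
      split => //; rewrite invf_div.
      case: hdx => c [hc ex]; rewrite ex; have -> : d * c / d = c by field.
      exact: (loc_D hD hst hQ).
    + have Vd : Vu Q d.
        split; first exact: (loc_D hD hst hQ).
        by apply: (loc_inv hD hst hQ hd) => Qd; apply: nPQ; rewrite (hu Q hQ Qd).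
      split => [inQ | ninQ].
      * have inQ1 : List.In Q L1 by case: inQ => // e; exfalso; exact: nPQ.
        by rewrite -mulrA; apply: Vmul => //; exact: IH1.
      * apply: Vmul => //; apply: IH2 => h; apply: ninQ; by right.
pose u := x / \prod_(d <- ds) d.
have hu : D u /\ D u^-1.
  split; apply/(hint hD hst hgcd hirkt hht) => Q hQ; have [k1 k2] := key Q hQ;
    case: (classic (List.In Q L)) => inQ.
  - by rewrite /u -invf_div; exact: (k1 inQ).2.
  - have nQx : ~ Q x by move=> Qx; apply: inQ; apply/hL.
    apply: (loc_mul hD hst hQ); [exact: (loc_D hD hst hQ) | exact: (k2 inQ).2].
  - by rewrite /u invf_div; exact: (k1 inQ).1.
  - have nQx : ~ Q x by move=> Qx; apply: inQ; apply/hL.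
    rewrite /u invf_div; apply: (loc_mul hD hst hQ); [exact: (k2 inQ).1 | exact: (loc_inv hD hst hQ hx)].
have ex : x = u * \prod_(d <- ds) d by rewrite /u; field.
exists (map (principal D) ds); split.
- move=> I hI; have [d [eI hd]] := in_map_inv hI; subst I.
  have [P [hP Px [hdD d0 hdx hdl huq]]] := hdsP d hd.
  apply: (homog_d hP hdD d0 _ huq).
  exact: (loc_P hD hst hP hdD Px x0 hdl).
- rewrite (prod_principal hD hst) (st_princ hD hst p0) => z; split.
  + by case=> c [hc ->]; exists (u * c); split; [apply: (Dmul hD); case: hu | rewrite ex; ring].
  + case=> c [hc ->]; exists (u^-1 * c); split; first by apply: (Dmul hD); case: hu.
    have u0 : u != 0 by apply: contraNneq x0 => u0; rewrite ex u0 mul0r.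
    by rewrite ex; field.
Qed.
End Two2.

Unset Implicit Arguments.
Theorem theoremS3 (K : fieldType) (D : K -> Prop) (st : (K -> Prop) -> (K -> Prop))
  (hD : is_domain_in D) (hst : star_fc D st) :
  cond1 D st <-> cond2 D st.
Proof.
split; first exact: (one_two hD hst).
by case=> hgcd [hirkt hht]; exact: (two_one hD hst hgcd hirkt hht).
Qed.
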